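(* Every finitely generated non-abelian free group is Hucha with respect to the family of its finitely generated infinite-index subgroups.
   Context: A positive cone of a group $G$ is a subsemigroup $P$ with $G=P\sqcup P^{-1}\sqcup\{1\}$. With a finite symmetric generating set $X$ and word metric $d_X$, an $r$-path is a sequence $g_0,\dots,g_n$ with $d_X(g_i,g_{i+1})\le r$. A set $S$ $r$-disconnects subsets $H_1,H_2$ if every $r$-path from $H_1$ to $H_2$ meets $S$; $S$ $r$-disconnects $P$ if there are $u,v\in P$ with $S$ $r$-disconnecting $\{u\},\{v\}$. A negative swamp of width $r$ for a subgroup $H$ (with respect to $P$) is $S\subseteq P^{-1}$ that $r$-disconnects $P$ and $r$-disconnects $g_1H,g_2H$ for some $g_1,g_2\in G$. A finitely generated left-orderable group $G$ is Hucha with respect to a family $\mathcal{H}$ of subgroups if for some (equivalently any) finite generating set, for every positive cone $P$, every $H\in\mathcal{H}$ and every $r>0$ there is a negative swamp of width $r$ for $H$. *)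

(* Defs.v *)
From Stdlib Require Import List Arith.
Import ListNotations.
Set Implicit Arguments.

Record grp := Grp {
  carrier :> Type;
  gmul : carrier -> carrier -> carrier;
  ginv : carrier -> carrier;
  gone : carrier;
  gmulA : forall x y z, gmul x (gmul y z) = gmul (gmul x y) z;
  gmul1l : forall x, gmul gone x = x;
  gmul1r : forall x, gmul x gone = x;
  gmulVl : forall x, gmul (ginv x) x = gone;
  gmulVr : forall x, gmul x (ginv x) = gone
}.

Section GroupDefs.
Variable G : grp.

Fixpoint gprod (w : list G) : G :=
  match w with [] => gone G | x :: t => gmul G x (gprod t) end.

Definition subset_of := G -> Prop.

Definition positive_cone (P : subset_of) : Prop :=
  (forall x y, P x -> P y -> P (gmul G x y)) /\
  (forall g, P g \/ P (ginv G g) \/ g = gone G) /\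
  (forall g, ~ (P g /\ P (ginv G g))) /\
  (forall g, ~ (P g /\ g = gone G)) /\
  (forall g, ~ (P (ginv G g) /\ g = gone G)).

Definition left_orderable : Prop := exists P, positive_cone P.

Definition generates (X : list G) : Prop :=
  forall g, exists w : list G, (forall x, In x w -> In x X) /\ gprod w = g.

Definition symmetric_set (X : list G) : Prop :=
  forall x, In x X -> In (ginv G x) X.

Definition finitely_generated_group : Prop :=
  exists X : list G, generates X.

(** word metric: d_X(g,h) <= r  iff  g^{-1} h is a product of at most r
    elements of X *)
Definition dist_le (X : list G) (g h : G) (r : nat) : Prop :=
  exists w : list G, (forall x, In x w -> In x X) /\ length w <= r /\
    gprod w = gmul G (ginv G g) h.

(** r-path g0, g1, ..., gn represented as g0 together with [g1; ...; gn] *)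
Fixpoint rpath (X : list G) (r : nat) (g0 : G) (l : list G) : Prop :=
  match l with
  | [] => True
  | h :: t => dist_le X g0 h r /\ rpath X r h t
  end.

Definition r_disconnects (X : list G) (r : nat) (S H1 H2 : subset_of) : Prop :=
  forall g0 l, rpath X r g0 l -> H1 g0 -> H2 (last l g0) ->
    exists x, In x (g0 :: l) /\ S x.

Definition r_disconnects_cone (X : list G) (r : nat) (S P : subset_of) : Prop :=
  exists u v, P u /\ P v /\
    r_disconnects X r S (fun x => x = u) (fun x => x = v).

Definition lcoset (g : G) (H : subset_of) : subset_of :=
  fun x => exists h, H h /\ x = gmul G g h.

Definition negative_swamp (X : list G) (P H : subset_of) (r : nat)
    (S : subset_of) : Prop :=
  (forall g, S g -> P (ginv G g)) /\
  r_disconnects_cone X r S P /\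
  exists g1 g2, r_disconnects X r S (lcoset g1 H) (lcoset g2 H).

Definition Hucha (Fam : subset_of -> Prop) : Prop :=
  finitely_generated_group /\ left_orderable /\
  forall X : list G, generates X -> symmetric_set X ->
  forall P, positive_cone P ->
  forall H, Fam H ->
  forall r : nat, 0 < r ->
  exists S, negative_swamp X P H r S.

Definition subgroup (H : subset_of) : Prop :=
  H (gone G) /\ (forall x y, H x -> H y -> H (gmul G x y)) /\
  (forall x, H x -> H (ginv G x)).

Definition finitely_generated_subgroup (H : subset_of) : Prop :=
  subgroup H /\
  exists L : list G, (forall x, In x L -> H x) /\
    forall g, H g -> exists w : list G,
      (forall x, In x w -> In x L \/ In (ginv G x) L) /\ gprod w = g.

(** infinite index: no finitely many left cosets cover G *)
Definition infinite_index (H : subset_of) : Prop :=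
  forall L : list G, exists g, forall x, In x L -> ~ H (gmul G (ginv G x) g).

(** * Free groups: a basis b_0,...,b_{n-1}; every element is uniquely
    represented by a reduced word. Letter (i,true) is b_i, (i,false) is b_i^{-1}. *)
Definition letter_val (b : nat -> G) (a : nat * bool) : G :=
  if snd a then b (fst a) else ginv G (b (fst a)).

Definition word_eval (b : nat -> G) (w : list (nat * bool)) : G :=
  gprod (map (letter_val b) w).

Fixpoint reduced_word (w : list (nat * bool)) : Prop :=
  match w with
  | [] => True
  | a :: t =>
      match t with
      | [] => True
      | c :: _ => ~ (fst a = fst c /\ snd a <> snd c)
      end /\ reduced_word t
  end.

Definition free_basis (n : nat) (b : nat -> G) : Prop :=
  forall g, exists! w : list (nat * bool),
    (forall a, In a w -> fst a < n) /\ reduced_word w /\ word_eval b w = g.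

End GroupDefs.

(* Main.v *)
Require Import Defs.
From Stdlib Require Import List Arith.
From Stdlib Require Import ZArith Lia Classical ClassicalEpsilon.
Import ListNotations.

Module A.

Section Grp.
Variable G : grp.
Local Notation "x * y" := (gmul G x y).
Local Notation inv := (ginv G).
Local Notation e := (gone G).

Lemma g_cancel_l (x y z : G) : x * y = x * z -> y = z.
Proof.
  intro H. rewrite <- (gmul1l G y), <- (gmul1l G z), <- (gmulVl G x), <- !gmulA, H. reflexivity.
Qed.

Lemma g_inv_unique (x y : G) : x * y = e -> y = inv x.
Proof. intro H. apply (g_cancel_l x). rewrite H, gmulVr. reflexivity. Qed.

Lemma g_inv_inv (x : G) : inv (inv x) = x.
Proof. symmetry. apply g_inv_unique. apply gmulVl. Qed.

Lemma g_inv_mul (x y : G) : inv (x * y) = inv y * inv x.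
Proof.
  symmetry. apply g_inv_unique. rewrite gmulA, <- (gmulA G x y), gmulVr, gmul1r, gmulVr. reflexivity.
Qed.

Lemma g_inv_one : inv e = e.
Proof. symmetry. apply g_inv_unique. apply gmul1l. Qed.

Lemma g_Vl_mul (x y : G) : inv x * (x * y) = y.
Proof. rewrite gmulA, gmulVl, gmul1l. reflexivity. Qed.

Lemma g_V_mul (x y : G) : x * (inv x * y) = y.
Proof. rewrite gmulA, gmulVr, gmul1l. reflexivity. Qed.

Lemma g_inv_inj (x y : G) : inv x = inv y -> x = y.
Proof. intro H. rewrite <- (g_inv_inv x), H, g_inv_inv. reflexivity. Qed.

Lemma gprod_app (u v : list G) : gprod G (u ++ v) = gprod G u * gprod G v.
Proof.
  induction u as [|x u IH]; simpl. - rewrite gmul1l; reflexivity.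
  - rewrite IH, gmulA. reflexivity.
Qed.
End Grp.

Definition inv_l (a : nat * bool) : nat * bool := (fst a, negb (snd a)).
Definition invw (w : list (nat * bool)) := rev (map inv_l w).
Definition canc (x y : nat * bool) : Prop := fst x = fst y /\ snd x <> snd y.

Lemma inv_l_inv a : inv_l (inv_l a) = a.
Proof. destruct a as [i s]; unfold inv_l; simpl; rewrite Bool.negb_involutive; reflexivity. Qed.

Lemma invw_cons a w : invw (a :: w) = invw w ++ [inv_l a].
Proof. reflexivity. Qed.

Lemma invw_app u v : invw (u ++ v) = invw v ++ invw u.
Proof. unfold invw. rewrite map_app, rev_app_distr. reflexivity. Qed.

Lemma invw_inv w : invw (invw w) = w.
Proof.
  unfold invw. rewrite map_rev, rev_involutive, map_map.
  transitivity (map (fun x => x) w). apply map_ext. apply inv_l_inv. apply map_id.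
Qed.

Lemma invw_length w : length (invw w) = length w.
Proof. unfold invw. rewrite length_rev, length_map. reflexivity. Qed.

Lemma canc_sym x y : canc x y -> canc y x.
Proof. unfold canc; intros [H1 H2]; split; congruence. Qed.

Lemma canc_inv x y : canc (inv_l x) (inv_l y) <-> canc x y.
Proof.
  destruct x as [i s], y as [j t]; unfold canc, inv_l; simpl.
  destruct s, t; simpl; intuition congruence.
Qed.

Lemma canc_iff x y : canc x y <-> y = inv_l x.
Proof.
  destruct x as [i s], y as [j t]; unfold canc, inv_l; simpl.
  destruct s, t; simpl; split; intros; try (intuition congruence);
   try (inversion H; subst; intuition congruence).
Qed.

Definition junc (u v : list (nat * bool)) : Prop :=
  match rev u, v with
  | x :: _, y :: _ => ~ canc x y
  | _, _ => True
  end.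

Lemma reduced_cons_iff a w :
  reduced_word (a :: w) <-> (match w with [] => True | c :: _ => ~ canc a c end) /\ reduced_word w.
Proof. reflexivity. Qed.

Lemma reduced_app u v :
  reduced_word (u ++ v) <-> reduced_word u /\ reduced_word v /\ junc u v.
Proof.
  induction u as [|a u IH].
  - simpl. unfold junc; simpl. tauto.
  - simpl app. rewrite !reduced_cons_iff, IH.
    destruct u as [|c u'].
    + simpl. unfold junc. simpl. destruct v; unfold canc; simpl; tauto.
    + assert (Hj : junc (a :: c :: u') v <-> junc (c :: u') v).
      { unfold junc. simpl rev. rewrite <- !app_assoc. simpl.
        destruct (rev u'); simpl; tauto. }
      rewrite Hj. unfold canc. simpl. tauto.
Qed.

Lemma reduced_invw w : reduced_word w -> reduced_word (invw w).
Proof.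
  induction w as [|a w IH]; intros H. simpl; auto.
  rewrite invw_cons. apply reduced_app. apply reduced_cons_iff in H. destruct H as [H1 H2].
  split. auto. split. simpl; auto.
  unfold junc. unfold invw at 1. rewrite rev_involutive.
  destruct w as [|c w]; simpl. auto. rewrite canc_inv. intro Hc. apply H1. apply canc_sym. auto.
Qed.

Lemma reduced_sub_l u v : reduced_word (u ++ v) -> reduced_word u.
Proof. rewrite reduced_app; tauto. Qed.
Lemma reduced_sub_r u v : reduced_word (u ++ v) -> reduced_word v.
Proof. rewrite reduced_app; tauto. Qed.

Lemma reduce_concat : forall a b, reduced_word a -> reduced_word b ->
  exists a' s b', a = a' ++ s /\ b = invw s ++ b' /\ reduced_word (a' ++ b').
Proof.
  intro a. induction a as [|x a0 IH] using rev_ind; intros b Ha Hb.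
  - exists [], [], b. simpl. auto.
  - destruct b as [|y b0].
    + exists (a0 ++ [x]), [], []. rewrite !app_nil_r. simpl. auto.
    + destruct (classic (canc x y)) as [Hc|Hc].
      * apply canc_iff in Hc. subst y.
        destruct (IH b0 (reduced_sub_l _ _ Ha) (reduced_sub_r [inv_l x] b0 Hb)) as (a'' & s' & b' & E1 & E2 & Hr).
        exists a'', (s' ++ [x]), b'. split. rewrite E1, app_assoc. reflexivity.
        split. rewrite invw_app. simpl. rewrite E2. reflexivity. exact Hr.
      * exists (a0 ++ [x]), [], (y :: b0). simpl. split. rewrite app_nil_r; auto. split; auto.
        apply reduced_app. split; auto. split; auto. unfold junc. rewrite rev_app_distr. simpl. exact Hc.
Qed.

End A.
Import A.

Module B.

Section FG.
Variable G : grp.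
Variable n : nat.
Variable b : nat -> G.
Hypothesis Hfb : free_basis G n b.
Local Notation "x * y" := (gmul G x y).
Local Notation inv := (ginv G).
Local Notation e := (gone G).
Local Notation ev := (word_eval G b).

Definition okw (w : list (nat * bool)) := forall a, In a w -> fst a < n.
Definition rw (g : G) (w : list (nat*bool)) := okw w /\ reduced_word w /\ ev w = g.

Definition red (g : G) : list (nat * bool) :=
  proj1_sig (constructive_indefinite_description _
     (match Hfb g with ex_intro _ w (conj H _) => ex_intro (fun w => rw g w) w H end)).

Lemma red_spec g : rw g (red g).
Proof. unfold red. destruct constructive_indefinite_description as [w Hw]. exact Hw. Qed.

Lemma red_unique g w : rw g w -> w = red g.
Proof.
  intro Hw. destruct (Hfb g) as [w0 [H0 Hu]].
  rewrite <- (Hu w Hw). apply Hu. apply red_spec.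
Qed.

Lemma red_ev g : ev (red g) = g.
Proof. apply red_spec. Qed.
Lemma red_ok g : okw (red g).
Proof. apply red_spec. Qed.
Lemma red_red g : reduced_word (red g).
Proof. apply red_spec. Qed.

Lemma okw_app u v : okw (u ++ v) <-> okw u /\ okw v.
Proof. unfold okw. split. intros H; split; intros a Ha; apply H; apply in_or_app; auto.
  intros [H1 H2] a Ha. apply in_app_or in Ha. destruct Ha; auto. Qed.

Lemma okw_invw w : okw w -> okw (invw w).
Proof. unfold okw, invw. intros H a Ha. apply in_rev in Ha. apply in_map_iff in Ha.
  destruct Ha as [x [<- Hx]]. simpl. apply H; auto. Qed.

Lemma ev_app u v : ev (u ++ v) = ev u * ev v.
Proof. unfold word_eval. rewrite map_app. apply gprod_app. Qed.

Lemma ev_nil : ev [] = e.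
Proof. reflexivity. Qed.

Lemma ev_cons a w : ev (a :: w) = letter_val G b a * ev w.
Proof. reflexivity. Qed.

Lemma lv_inv a : letter_val G b (inv_l a) = inv (letter_val G b a).
Proof. destruct a as [i [|]]; unfold letter_val, inv_l; simpl; auto. rewrite g_inv_inv; auto. Qed.

Lemma ev_single a : ev [a] = letter_val G b a.
Proof. rewrite ev_cons, ev_nil, gmul1r. reflexivity. Qed.

Lemma ev_invw w : ev (invw w) = inv (ev w).
Proof.
  induction w as [|a w IH]. simpl. rewrite ev_nil, g_inv_one. reflexivity.
  rewrite invw_cons, ev_app, IH, ev_single, ev_cons, g_inv_mul, lv_inv. reflexivity.
Qed.

Lemma red_one : red e = [].
Proof. symmetry. apply red_unique. split. intros a []. split. simpl; auto. reflexivity. Qed.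

Lemma red_inv g : red (inv g) = invw (red g).
Proof.
  symmetry. apply red_unique. split. apply okw_invw, red_ok. split. apply reduced_invw, red_red.
  rewrite ev_invw, red_ev. reflexivity.
Qed.

Lemma red_mul_decomp g h : exists a' s b', red g = a' ++ s /\ red h = invw s ++ b' /\
   red (g * h) = a' ++ b'.
Proof.
  destruct (reduce_concat (red g) (red h) (red_red g) (red_red h)) as (a' & s & b' & E1 & E2 & Hr).
  exists a', s, b'. split; auto. split; auto. symmetry. apply red_unique.
  split. apply okw_app. pose proof (red_ok g) as Hg. pose proof (red_ok h) as Hh.
  rewrite E1 in Hg. rewrite E2 in Hh. apply okw_app in Hg. apply okw_app in Hh. tauto.
  split; auto.
  rewrite <- (red_ev g), <- (red_ev h), E1, E2, !ev_app, ev_invw.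
  rewrite <- gmulA. f_equal. rewrite g_V_mul. reflexivity.
Qed.

Definition norm (g : G) := length (red g).

Lemma norm_mul g h : norm (g * h) <= norm g + norm h.
Proof.
  unfold norm. destruct (red_mul_decomp g h) as (a' & s & b' & E1 & E2 & E3).
  rewrite E1, E2, E3, !length_app. lia.
Qed.

Lemma norm_inv g : norm (inv g) = norm g.
Proof. unfold norm. rewrite red_inv, invw_length. reflexivity. Qed.

Lemma norm_one : norm e = 0.
Proof. unfold norm. rewrite red_one. reflexivity. Qed.

Lemma red_concat_reduced g h : junc (red g) (red h) -> red (g * h) = red g ++ red h.
Proof.
  intro J. symmetry. apply red_unique. split. apply okw_app. split; apply red_ok.
  split. apply reduced_app. split. apply red_red. split. apply red_red. exact J.
  rewrite ev_app, !red_ev. reflexivity.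
Qed.

Lemma first_letter_diff x y l1 l2 t1 t2 : red x = l1 :: t1 -> red y = l2 :: t2 -> l1 <> l2 ->
  norm (inv x * y) = norm x + norm y.
Proof.
  intros E1 E2 D. unfold norm. rewrite red_concat_reduced.
  rewrite length_app, red_inv, invw_length. reflexivity.
  rewrite red_inv, E1, E2. unfold junc. unfold invw. rewrite rev_involutive. simpl.
  rewrite canc_iff, inv_l_inv. auto.
Qed.

End FG.

End B.
Import B.

Module C.
Local Open Scope Z_scope.

Definition ser := list nat -> Z.
Definition one : ser := fun w => match w with [] => 1 | _ => 0 end.
Definition der (a : nat) (f : ser) : ser := fun u => f (a :: u).

Fixpoint mul (f g : ser) (w : list nat) : Z :=
  match w with
  | [] => f [] * g []
  | a :: w' => f [] * g (a :: w') + mul (der a f) g w'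
  end.

Lemma mul_nil f g : mul f g [] = f [] * g [].
Proof. reflexivity. Qed.
Lemma mul_cons f g a w : mul f g (a::w) = f [] * g (a::w) + mul (der a f) g w.
Proof. reflexivity. Qed.
Lemma one_nil : one [] = 1. Proof. reflexivity. Qed.
Lemma one_cons a w : one (a::w) = 0. Proof. reflexivity. Qed.

Lemma mul_ext : forall w f f' g g', (forall u, f u = f' u) -> (forall u, g u = g' u) ->
  mul f g w = mul f' g' w.
Proof.
  induction w as [|a w IH]; intros f f' g g' Hf Hg; rewrite ?mul_nil, ?mul_cons.
  - rewrite Hf, Hg; reflexivity.
  - rewrite Hf, Hg. f_equal. apply IH; auto. intro u; apply Hf.
Qed.

Lemma mul_zero_l : forall w f g, (forall u, f u = 0) -> mul f g w = 0.
Proof.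
  induction w as [|a w IH]; intros f g Hf; rewrite ?mul_nil, ?mul_cons. rewrite Hf; lia.
  rewrite Hf, IH. lia. intro u; apply Hf.
Qed.

Lemma mul_one_l : forall w g, mul one g w = g w.
Proof.
  intros [|a w] g; rewrite ?mul_nil, ?mul_cons, one_nil. lia. rewrite mul_zero_l. lia. intro u; reflexivity.
Qed.

Lemma mul_one_r : forall w f, mul f one w = f w.
Proof.
  induction w as [|a w IH]; intros f; rewrite ?mul_nil, ?mul_cons, ?one_nil, ?one_cons. lia. rewrite IH. unfold der. lia.
Qed.

Lemma mul_lin_l : forall w (F f f' g : ser) (x : Z), (forall u, F u = x * f u + f' u) ->
  mul F g w = x * mul f g w + mul f' g w.
Proof.
  induction w as [|a w IH]; intros F f f' g x HF; rewrite ?mul_nil, ?mul_cons.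
  - rewrite HF. ring.
  - rewrite HF. rewrite (IH (der a F) (der a f) (der a f') g x). ring.
    intro u. unfold der. apply HF.
Qed.

Lemma mul_assoc : forall w f g h, mul (mul f g) h w = mul f (mul g h) w.
Proof.
  induction w as [|a w IH]; intros f g h; rewrite ?mul_nil, ?mul_cons.
  - ring.
  - rewrite (mul_lin_l w (der a (mul f g)) (der a g) (mul (der a f) g) h (f [])).
    2:{ intro u. reflexivity. }
    rewrite IH, mul_nil. ring.
Qed.

Definition alt (k : nat) : Z := if Nat.even k then 1 else -1.

Definition Lser (l : nat * bool) : ser :=
  if snd l then (fun w => match w with [] => 1 | [a] => if Nat.eqb a (fst l) then 1 else 0 | _ => 0 end)
  else (fun w => if forallb (Nat.eqb (fst l)) w then alt (length w) else 0).

Lemma alt_S k : alt (S k) = - alt k.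
Proof. unfold alt. rewrite Nat.even_succ, <- Nat.negb_even. destruct (Nat.even k); reflexivity. Qed.

Lemma Lt_nil i : Lser (i,true) [] = 1. Proof. reflexivity. Qed.
Lemma Lf_nil i : Lser (i,false) [] = 1. Proof. reflexivity. Qed.
Lemma Lt_cons i a w : Lser (i,true) (a::w) = if Nat.eqb a i then one w else 0.
Proof. unfold Lser; simpl. destruct w; destruct (Nat.eqb a i); reflexivity. Qed.
Lemma Lf_cons i a w : Lser (i,false) (a::w) = if Nat.eqb a i then - Lser (i,false) w else 0.
Proof. unfold Lser; simpl. rewrite Nat.eqb_sym. destruct (Nat.eqb a i); simpl.
  destruct (forallb (Nat.eqb i) w). rewrite alt_S; reflexivity. reflexivity. reflexivity. Qed.

Lemma Lser_tf i w : mul (Lser (i, true)) (Lser (i, false)) w = one w.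
Proof.
  destruct w as [|a w]. reflexivity.
  rewrite mul_cons, Lt_nil, one_cons.
  rewrite (mul_lin_l w _ one (fun _ => 0) _ (if Nat.eqb a i then 1 else 0)).
  2:{ intro u. unfold der. rewrite Lt_cons. destruct (Nat.eqb a i); lia. }
  rewrite mul_one_l, mul_zero_l by reflexivity. rewrite Lf_cons.
  destruct (Nat.eqb a i); lia.
Qed.

Lemma Lser_ft i : forall w, mul (Lser (i, false)) (Lser (i, true)) w = one w.
Proof.
  induction w as [|a w IH]. reflexivity.
  rewrite mul_cons, Lf_nil, one_cons.
  rewrite (mul_lin_l w _ (Lser (i,false)) (fun _ => 0) _ (if Nat.eqb a i then -1 else 0)).
  2:{ intro u. unfold der. rewrite Lf_cons. destruct (Nat.eqb a i); lia. }
  rewrite IH, mul_zero_l by reflexivity. rewrite Lt_cons.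
  destruct w; rewrite ?one_nil, ?one_cons; destruct (Nat.eqb a i); lia.
Qed.

Lemma Lser_inv_r l w : mul (Lser l) (Lser (inv_l l)) w = one w.
Proof. destruct l as [i [|]]; unfold inv_l; simpl. apply Lser_tf. apply Lser_ft. Qed.

Definition mu (w : list (nat * bool)) : ser := fold_right (fun l acc => mul (Lser l) acc) one w.

Lemma mu_nil v : mu [] v = one v.
Proof. reflexivity. Qed.
Lemma mu_cons l w v : mu (l :: w) v = mul (Lser l) (mu w) v.
Proof. reflexivity. Qed.

Lemma mu_app : forall w1 w2 v, mu (w1 ++ w2) v = mul (mu w1) (mu w2) v.
Proof.
  induction w1 as [|l w1 IH]; intros w2 v.
  - simpl app. rewrite mul_ext with (f' := one) (g' := mu w2) by reflexivity. rewrite mul_one_l. reflexivity.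
  - simpl app. rewrite mu_cons. rewrite mul_ext with (f' := Lser l) (g' := mul (mu w1) (mu w2)).
    2: reflexivity. 2: intro; apply IH.
    rewrite <- mul_assoc. apply mul_ext; intro u; reflexivity.
Qed.

Lemma mu_cancel : forall s w v, mu (s ++ invw s ++ w) v = mu w v.
Proof.
  induction s as [|x s IH]; intros w v. reflexivity.
  rewrite invw_cons. simpl app. rewrite <- !app_assoc. simpl app.
  rewrite mu_cons. rewrite mul_ext with (f' := Lser x) (g' := mu (inv_l x :: w)).
  2: reflexivity. 2: intro; apply IH.
  rewrite mul_ext with (f' := Lser x) (g' := mul (Lser (inv_l x)) (mu w)) by reflexivity.
  rewrite <- mul_assoc. rewrite mul_ext with (f' := one) (g' := mu w). apply mul_one_l.
  apply Lser_inv_r. reflexivity.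
Qed.

Lemma mu_empty : forall w, mu w [] = 1.
Proof.
  induction w as [|l w IH]. reflexivity. rewrite mu_cons. simpl. rewrite IH.
  destruct l as [i [|]]; simpl; reflexivity.
Qed.

End C.
Import C.

Module C2.
Local Open Scope Z_scope.

Fixpoint lexlt (u v : list nat) : Prop :=
  match u, v with
  | a :: u', b :: v' => (a < b)%nat \/ (a = b /\ lexlt u' v')
  | _, _ => False
  end.

Definition slt (u v : list nat) : Prop :=
  (length u < length v)%nat \/ (length u = length v /\ lexlt u v).

Lemma lexlt_irrefl : forall u, ~ lexlt u u.
Proof. induction u as [|a u IH]; simpl; intuition lia. Qed.

Lemma lexlt_trans : forall u v w, lexlt u v -> lexlt v w -> lexlt u w.
Proof.
  induction u as [|a u IH]; intros [|b v] [|c w]; simpl; try tauto.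
  intros H1 H2. destruct H1 as [H1|[-> H1]]; destruct H2 as [H2|[-> H2]]; try (left; lia).
  right. split; auto. eapply IH; eauto.
Qed.

Lemma lexlt_total : forall u v, length u = length v -> u = v \/ lexlt u v \/ lexlt v u.
Proof.
  induction u as [|a u IH]; intros [|b v]; simpl; try discriminate; auto.
  intro E. injection E as E. destruct (lt_eq_lt_dec a b) as [[H|H]|H].
  - right; left; left; auto.
  - subst. destruct (IH v E) as [->|[H|H]]; auto.
  - right; right; left; auto.
Qed.

Lemma slt_irrefl u : ~ slt u u.
Proof. unfold slt. intros [H|[_ H]]. lia. apply (lexlt_irrefl u H). Qed.

Lemma slt_trans u v w : slt u v -> slt v w -> slt u w.
Proof.
  unfold slt. intros [H1|[E1 H1]] [H2|[E2 H2]]; try (left; lia).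
  right. split. lia. eapply lexlt_trans; eauto.
Qed.

Lemma slt_total u v : u = v \/ slt u v \/ slt v u.
Proof.
  unfold slt. destruct (lt_eq_lt_dec (length u) (length v)) as [[H|H]|H]; auto.
  destruct (lexlt_total u v H) as [->|[H'|H']]; auto.
Qed.

Lemma slt_len u v : slt u v -> (length u <= length v)%nat.
Proof. unfold slt; intros [H|[H _]]; lia. Qed.

Lemma slt_shorter u v : (length u < length v)%nat -> slt u v.
Proof. unfold slt; auto. Qed.

Lemma nat_min (A : nat -> Prop) : (exists k, A k) -> exists k, A k /\ forall j, (j < k)%nat -> ~ A j.
Proof.
  intros [k Hk]. revert Hk. induction k as [k IH] using (well_founded_induction lt_wf).
  intro Hk. destruct (classic (exists j, (j < k)%nat /\ A j)) as [[j [Hj Aj]]|Hn].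
  - apply (IH j Hj Aj).
  - exists k. split; auto. intros j Hj Aj. apply Hn. eauto.
Qed.

Lemma lex_min : forall k (Q : list nat -> Prop), (exists w, length w = k /\ Q w) ->
  exists w, length w = k /\ Q w /\ forall v, length v = k -> lexlt v w -> ~ Q v.
Proof.
  induction k as [|k IH]; intros Q [w [Hl Hw]].
  - destruct w; try discriminate. exists []. split; auto. split; auto. intros v _ H. destruct v; simpl in H; tauto.
  - destruct (nat_min (fun a => exists t, length t = k /\ Q (a :: t))) as [a [[t0 [Ht0 Qt0]] Hmin]].
    { destruct w as [|a t]; try discriminate. exists a, t. simpl in Hl. split; auto. }
    destruct (IH (fun t => Q (a :: t))) as [t [Ht [Qt Htmin]]]. exists t0; auto.
    exists (a :: t). split. simpl; auto. split; auto.
    intros [|c v] Hv Hlt; simpl in Hlt; try tauto. simpl in Hv. injection Hv as Hv.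
    destruct Hlt as [Hlt|[-> Hlt]].
    + intro Qv. apply (Hmin c Hlt). exists v; auto.
    + apply Htmin; auto.
Qed.

Lemma slt_min (Q : list nat -> Prop) : (exists w, Q w) -> exists w, Q w /\ forall v, slt v w -> ~ Q v.
Proof.
  intros [w Hw].
  destruct (nat_min (fun k => exists w, length w = k /\ Q w)) as [k [Hk Hkmin]]. eauto.
  destruct (lex_min k Q Hk) as [w0 [Hl [Qw Hmin]]].
  exists w0. split; auto. intros v [H|[H1 H2]] Qv.
  - apply (Hkmin (length v)). lia. eauto.
  - apply (Hmin v). lia. auto. auto.
Qed.

Definition Lead (sg : Z) (f : ser) : Prop :=
  exists w, w <> [] /\ 0 < sg * f w /\ forall v, v <> [] -> slt v w -> f v = 0.

Lemma Lead_ext sg f g : (forall u, f u = g u) -> Lead sg f -> Lead sg g.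
Proof.
  intros E [w [H1 [H2 H3]]]. exists w. rewrite <- E. split; auto. split; auto.
  intros v Hv Hs. rewrite <- E. auto.
Qed.

Lemma Lead_one sg : ~ Lead sg one.
Proof. intros [w [H1 [H2 _]]]. destruct w; [congruence|]. rewrite one_cons in H2. lia. Qed.

Lemma mul_prefix0 : forall v f g, v <> [] ->
  (forall u t, u <> [] -> t <> [] -> u ++ t = v -> f u = 0) ->
  mul f g v = f [] * g v + f v * g [].
Proof.
  induction v as [|a w IH]; intros f g Hv Hf. congruence.
  rewrite mul_cons. destruct w as [|c w'].
  - rewrite mul_nil. reflexivity.
  - rewrite IH. unfold der.
    rewrite (Hf [a] (c :: w')). ring. congruence. congruence. reflexivity.
    congruence. intros u t Hu Ht E. unfold der. apply (Hf (a :: u) t). congruence. auto.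
    rewrite <- E. reflexivity.
Qed.

Lemma Lead_mul sg f g : f [] = 1 -> g [] = 1 -> Lead sg f -> Lead sg g -> Lead sg (mul f g).
Proof.
  intros F0 G0 [w1 [N1 [P1 Z1]]] [w2 [N2 [P2 Z2]]].
  assert (Hsum : forall v, v <> [] -> (length v <= length w1)%nat -> (length v <= length w2)%nat ->
             mul f g v = f v + g v).
  { intros v Hv L1 L2. rewrite mul_prefix0; auto. rewrite F0, G0. ring.
    intros u t Hu Ht E. apply Z1. auto. apply slt_shorter.
    rewrite <- E in L1. rewrite length_app in L1. destruct t; [congruence|]. simpl in L1. lia. }
  destruct (slt_total w1 w2) as [<-|[H|H]].
  - exists w1. split; auto. rewrite Hsum; auto. split. lia.
    intros v Hv Hs. rewrite Hsum; auto. rewrite Z1, Z2; auto. all: apply slt_len; auto.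
  - exists w1. split; auto. rewrite Hsum; auto. 2: apply slt_len; auto. rewrite (Z2 w1); auto. split. lia.
    intros v Hv Hs. rewrite Hsum; auto. rewrite Z1, Z2; auto. eapply slt_trans; eauto.
    apply slt_len; auto. apply slt_len; eapply slt_trans; eauto.
  - exists w2. split; auto. rewrite Hsum; auto. 2: apply slt_len; auto. rewrite (Z1 w2); auto. split. lia.
    intros v Hv Hs. rewrite Hsum; auto. rewrite Z1, Z2; auto. eapply slt_trans; eauto.
    apply slt_len; eapply slt_trans; eauto. apply slt_len; auto.
Qed.

Lemma Lead_or f : (exists v, v <> [] /\ f v <> 0) -> Lead 1 f \/ Lead (-1) f.
Proof.
  intro H. destruct (slt_min (fun v => v <> [] /\ f v <> 0) H) as [w [[Hw Fw] Hmin]].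
  assert (Hz : forall v, v <> [] -> slt v w -> f v = 0).
  { intros v Hv Hs. destruct (Z.eq_dec (f v) 0); auto. exfalso. apply (Hmin v Hs). auto. }
  destruct (Z_lt_le_dec 0 (f w)).
  - left. exists w. split; auto. split; auto. lia.
  - right. exists w. split; auto. split; auto. lia.
Qed.

End C2.
Import C2.

Module C3.
Local Open Scope Z_scope.

Definition headnot (i : nat) (t : list nat) : Prop :=
  match t with b :: _ => b <> i | [] => True end.
Fixpoint alt_w (t : list nat) : Prop :=
  match t with a :: t' => headnot a t' /\ alt_w t' | [] => True end.
Definition sgn (s : bool) : Z := if s then 1 else -1.

Lemma mul_Lf_headnot i g t : headnot i t -> mul (Lser (i,false)) g t = g t.
Proof.
  destruct t as [|a t]; intro H. rewrite mul_nil, Lf_nil. ring.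
  rewrite mul_cons, Lf_nil, mul_zero_l. ring. intro u. unfold der. rewrite Lf_cons.
  simpl in H. destruct (Nat.eqb_spec a i); [congruence|reflexivity].
Qed.

Lemma mu_step l w a t : (a = fst l -> headnot (fst l) t) ->
  mu (l :: w) (a :: t) = mu w (a :: t) + (if Nat.eqb a (fst l) then sgn (snd l) * mu w t else 0).
Proof.
  intro Hh. rewrite mu_cons. destruct l as [i [|]]; simpl fst in *; simpl snd; unfold sgn.
  - rewrite mul_cons, Lt_nil.
    rewrite (mul_lin_l t _ one (fun _ => 0) _ (if Nat.eqb a i then 1 else 0)).
    2:{ intro u. unfold der. rewrite Lt_cons. destruct (Nat.eqb a i); lia. }
    rewrite mul_one_l, mul_zero_l by reflexivity. destruct (Nat.eqb a i); ring.
  - rewrite mul_cons, Lf_nil.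
    rewrite (mul_lin_l t _ (Lser (i,false)) (fun _ => 0) _ (if Nat.eqb a i then -1 else 0)).
    2:{ intro u. unfold der. rewrite Lf_cons. destruct (Nat.eqb a i); lia. }
    rewrite (mul_zero_l t (fun _ => 0)) by reflexivity. destruct (Nat.eqb_spec a i).
    + rewrite mul_Lf_headnot by auto. ring.
    + ring.
Qed.

Lemma mu_step_ne l w a t : a <> fst l -> mu (l :: w) (a :: t) = mu w (a :: t).
Proof.
  intro H. rewrite mu_step by congruence. destruct (Nat.eqb_spec a (fst l)); [congruence|ring].
Qed.

Lemma mu_step_eq l w t : headnot (fst l) t ->
  mu (l :: w) (fst l :: t) = mu w (fst l :: t) + sgn (snd l) * mu w t.
Proof. intro H. rewrite mu_step by auto. rewrite Nat.eqb_refl. reflexivity. Qed.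

Lemma mu_headnot l w t : headnot (fst l) t -> mu (l :: w) t = mu w t.
Proof.
  destruct t as [|a t]; intro H. rewrite !mu_empty; auto. apply mu_step_ne. exact H.
Qed.

Fixpoint vv (w : list (nat * bool)) : list nat :=
  match w with
  | [] => []
  | l :: w' => match w' with
              | l' :: _ => if Nat.eqb (fst l) (fst l') then vv w' else fst l :: vv w'
              | [] => [fst l]
              end
  end.

Definition starts (i : nat) (w : list (nat * bool)) : Prop :=
  match w with l :: _ => fst l = i | [] => False end.

Lemma vv_same l w : starts (fst l) w -> vv (l :: w) = vv w.
Proof. destruct w as [|l' w]; simpl; intro H. tauto. rewrite H, Nat.eqb_refl. reflexivity. Qed.

Lemma vv_diff l w : ~ starts (fst l) w -> vv (l :: w) = fst l :: vv w.
Proof. destruct w as [|l' w]; simpl; intro H. reflexivity.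
  destruct (Nat.eqb_spec (fst l) (fst l')); [congruence|reflexivity]. Qed.

Lemma vv_head : forall l w, vv (l :: w) = fst l :: tl (vv (l :: w)).
Proof.
  intros l w. revert l. induction w as [|l' w IH]; intro l. reflexivity.
  destruct (classic (starts (fst l) (l' :: w))) as [H|H].
  - rewrite vv_same by auto. simpl in H. rewrite IH. simpl. rewrite H. reflexivity.
  - rewrite vv_diff by auto. reflexivity.
Qed.

Lemma vv_headnot i w : ~ starts i w -> headnot i (vv w).
Proof.
  destruct w as [|l w]; intro H. simpl; auto. rewrite vv_head. simpl. simpl in H. auto.
Qed.

Lemma vv_alt : forall w, alt_w (vv w).
Proof.
  induction w as [|l w IH]. simpl; auto.
  destruct (classic (starts (fst l) w)) as [H|H].
  - rewrite vv_same; auto.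
  - rewrite vv_diff by auto. simpl. split; auto. apply vv_headnot; auto.
Qed.

Lemma vv_len_pos l w : (1 <= length (vv (l :: w)))%nat.
Proof. rewrite vv_head. simpl. lia. Qed.

Lemma red_tail a w : reduced_word (a :: w) -> reduced_word w.
Proof. intro H. exact (proj2 H). Qed.

Lemma claimB : forall w, reduced_word w ->
  (forall t, alt_w t -> (length (vv w) <= length t)%nat -> t <> vv w -> mu w t = 0) /\
  (forall l w', w = l :: w' -> forall t, headnot (fst l) t -> alt_w t ->
      (length (vv w) <= length t + 1)%nat -> t <> tl (vv w) -> mu w t = 0).
Proof.
  induction w as [|l w' IH]; intros Hr.
  - split. intros t _ _ Ht. simpl in Ht; destruct t; [congruence|]. reflexivity. intros; discriminate.
  - destruct (IH (red_tail _ _ Hr)) as [IHB IHB2].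
    pose proof (vv_head l w') as Hvh.
    split.
    + intros t Ht Hl Hne. destruct t as [|a t'].
      { pose proof (vv_len_pos l w'). change (length (@nil nat)) with 0%nat in Hl. lia. }
      destruct Ht as [Hh Ht'].
      rewrite mu_step by (intros ->; exact Hh).
      destruct (classic (starts (fst l) w')) as [Hs|Hs].
      * rewrite vv_same in Hl, Hne by auto.
        rewrite IHB; [ | split; auto | exact Hl | exact Hne]. destruct (Nat.eqb_spec a (fst l)) as [Ea|Ea]; [|ring].
        destruct w' as [|l' w'']; [simpl in Hs; tauto|]. simpl in Hs.
        rewrite (IHB2 l' w'' eq_refl t'); try ring.
        -- rewrite Hs; subst a; auto.
        -- auto.
        -- change (length (a :: t')) with (S (length t')) in Hl. lia.
        -- intro E. apply Hne. rewrite vv_head, Hs, <- E, Ea. reflexivity.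
      * rewrite vv_diff in Hl, Hne by auto. simpl in Hl.
        rewrite (IHB (a :: t')); [ | split; auto | simpl; lia | intro E; rewrite <- E in Hl; simpl in Hl; lia].
        destruct (Nat.eqb_spec a (fst l)) as [Ea|Ea]; [|ring].
        rewrite (IHB t'); [ring | auto | lia | intro E; apply Hne; rewrite Ea, E; reflexivity].
    + intros l0 w0 E t Hh Ht Hl Hne. injection E as <- <-.
      destruct t as [|a t'].
      { rewrite Hvh in Hl. destruct (tl (vv (l :: w'))) eqn:Et; [congruence|simpl in Hl; lia]. }
      rewrite mu_step_ne by exact Hh.
      destruct w' as [|l' w''].
      * reflexivity.
      * destruct (classic (starts (fst l) (l' :: w''))) as [Hs|Hs].
        -- rewrite vv_same in Hl, Hne by auto. simpl in Hs.
           apply (IHB2 l' w'' eq_refl); auto. rewrite Hs. exact Hh.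
        -- rewrite vv_diff in Hl, Hne by auto. cbn [length tl] in Hl, Hne.
           apply IHB; auto. cbn [length]. lia.
Qed.

Lemma claimC : forall w, reduced_word w -> forall l w', w = l :: w' ->
  exists k, 0 < k /\ mu w (vv w) = sgn (snd l) * k * mu w (tl (vv w)) /\ mu w (tl (vv w)) <> 0.
Proof.
  induction w as [|l0 w' IH]; intros Hr l w0 E. discriminate. injection E as E1 E2. subst l0 w0.
  pose proof (vv_head l w') as Hvh.
  assert (HtlH : headnot (fst l) (tl (vv (l :: w')))).
  { pose proof (vv_alt (l :: w')) as A. rewrite Hvh in A. simpl in A. tauto. }
  assert (D : mu (l :: w') (tl (vv (l :: w'))) = mu w' (tl (vv (l :: w')))).
  { apply mu_headnot; auto. }
  assert (Ec : mu (l :: w') (vv (l :: w')) = mu w' (fst l :: tl (vv (l :: w'))) + sgn (snd l) * mu w' (tl (vv (l :: w')))).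
  { rewrite Hvh at 1. apply mu_step_eq; auto. }
  rewrite D. 
  destruct w' as [|l' w''].
  - exists 1. rewrite Ec. simpl. split. lia. unfold one. destruct l as [i s]; simpl. unfold sgn. destruct s; simpl; split; lia.
  - destruct (classic (starts (fst l) (l' :: w''))) as [Hs|Hs].
    + simpl in Hs.
      assert (Sg : snd l' = snd l).
      { apply reduced_cons_iff in Hr. destruct Hr as [Hc _]. unfold canc in Hc.
        destruct (snd l'), (snd l); auto; exfalso; apply Hc; split; auto; congruence. }
      destruct (IH (red_tail _ _ Hr) l' w'' eq_refl) as [k [Hk [Hc Hd]]].
      assert (Vs : vv (l :: l' :: w'') = vv (l' :: w'')) by (apply vv_same; simpl; auto).
      assert (Hv2 : fst l' :: tl (vv (l' :: w'')) = vv (l' :: w'')) by (symmetry; apply vv_head).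
      exists (k + 1). rewrite Ec, Vs. split. lia. 
      rewrite <- Hs, Hv2, Hc, Sg. split. ring. exact Hd.
    + assert (Vd : vv (l :: l' :: w'') = fst l :: vv (l' :: w'')) by (apply vv_diff; auto).
      destruct (claimB _ (red_tail _ _ Hr)) as [HB _].
      assert (Z0 : mu (l' :: w'') (fst l :: vv (l' :: w'')) = 0).
      { apply HB; [split; [apply vv_headnot; auto | apply vv_alt] | cbn [length]; lia | ]. intro E. pose proof (f_equal (@length nat) E) as HH. cbn [length] in HH. lia. }
      destruct (IH (red_tail _ _ Hr) l' w'' eq_refl) as [k [Hk [Hc Hd]]].
      exists 1. rewrite Ec, Vd. cbn [tl]. rewrite Z0. split. lia. split. ring.
      rewrite Hc. unfold sgn. destruct (snd l'); nia.
Qed.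

Lemma magnus w : reduced_word w -> w <> [] -> exists v, v <> [] /\ mu w v <> 0.
Proof.
  intros Hr Hw. destruct w as [|l w']. congruence.
  destruct (claimC _ Hr l w' eq_refl) as [k [Hk [Hc Hd]]].
  exists (vv (l :: w')). split. rewrite vv_head. congruence.
  rewrite Hc. unfold sgn. destruct (snd l); nia.
Qed.

End C3.
Import C3.

Module D.

Section LO.
Variable G : grp.
Variable n : nat.
Variable b : nat -> G.
Hypothesis Hfb : free_basis G n b.
Local Notation "x * y" := (gmul G x y).
Local Notation inv := (ginv G).
Local Notation e := (gone G).
Local Notation red := (red G n b Hfb).

Definition muG (g : G) : ser := mu (red g).

Lemma muG_mul g h v : muG (g * h) v = mul (muG g) (muG h) v.
Proof.
  unfold muG. destruct (red_mul_decomp G n b Hfb g h) as (a' & s & b' & E1 & E2 & E3).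
  rewrite E1, E2, E3. rewrite <- mu_app. rewrite <- app_assoc, !mu_app.
  apply mul_ext. reflexivity. intro u. symmetry. apply mu_cancel.
Qed.

Lemma muG_one v : muG e v = one v.
Proof. unfold muG. rewrite red_one. reflexivity. Qed.

Lemma muG_nil g : muG g [] = 1%Z.
Proof. apply mu_empty. Qed.

Definition Pcone (g : G) : Prop := Lead 1 (muG g).

Lemma Pcone_mul x y : Pcone x -> Pcone y -> Pcone (x * y).
Proof.
  unfold Pcone. intros Hx Hy. apply Lead_ext with (f := mul (muG x) (muG y)).
  intro u; symmetry; apply muG_mul. apply Lead_mul; auto; apply muG_nil.
Qed.

Lemma Pcone_not_both g : ~ (Pcone g /\ Pcone (inv g)).
Proof.
  intros [H1 H2]. pose proof (Pcone_mul _ _ H1 H2) as H. rewrite gmulVr in H.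
  unfold Pcone in H. apply (Lead_one 1). eapply Lead_ext; [|exact H]. apply muG_one.
Qed.

Lemma Pcone_not_one : ~ Pcone e.
Proof. intro H. apply (Lead_one 1). eapply Lead_ext; [|exact H]. apply muG_one. Qed.

Lemma Pcone_tri g : Pcone g \/ Pcone (inv g) \/ g = e.
Proof.
  destruct (classic (g = e)) as [E|Ne]; auto.
  assert (Hr : red g <> []).
  { intro E. apply Ne. rewrite <- (red_ev G n b Hfb g), E. reflexivity. }
  destruct (magnus (red g) (red_red G n b Hfb g) Hr) as [v Hv].
  destruct (Lead_or (muG g) (ex_intro _ v Hv)) as [H|H]; auto.
  right; left. unfold Pcone.
  assert (Hinv : exists v, v <> [] /\ muG (inv g) v <> 0%Z).
  { destruct (classic (exists v, v <> [] /\ muG (inv g) v <> 0%Z)) as [Hx|Hx]; auto.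
    exfalso. apply (Lead_one (-1)). eapply Lead_ext; [|exact H]. intro u.
    assert (Hi : forall w, muG (inv g) w = one w).
    { intro w. destruct w as [|a w]. apply muG_nil. destruct (Z.eq_dec (muG (inv g) (a :: w)) 0) as [z|z]. exact z.
      exfalso. apply Hx. exists (a :: w). split; congruence. }
    rewrite <- (mul_one_r u (muG g)). rewrite <- muG_one, <- (gmulVr G g), muG_mul.
    apply mul_ext. reflexivity. intro w; rewrite Hi; reflexivity. }
  destruct (Lead_or _ Hinv) as [H'|H']; auto.
  exfalso. pose proof (Lead_mul _ _ _ (muG_nil g) (muG_nil (inv g)) H H') as HH.
  apply (Lead_one (-1)). eapply Lead_ext; [|exact HH]. intro u. rewrite <- muG_mul, gmulVr. apply muG_one.
Qed.

Lemma Pcone_positive_cone : positive_cone Pcone.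
Proof.
  split. exact Pcone_mul. split. exact Pcone_tri. split. exact Pcone_not_both.
  split. intros g [H ->]. apply Pcone_not_one; auto.
  intros g [H ->]. rewrite g_inv_one in H. apply Pcone_not_one; auto.
Qed.

Lemma free_left_orderable : left_orderable G.
Proof. exists Pcone. apply Pcone_positive_cone. Qed.

End LO.

End D.
Import D.

Module E.

Section Main.
Variable G : grp.
Variable n : nat.
Variable b : nat -> G.
Hypothesis Hfb : free_basis G n b.
Local Notation "x * y" := (gmul G x y).
Local Notation inv := (ginv G).
Local Notation e := (gone G).
Local Notation red := (red G n b Hfb).
Local Notation norm := (norm G n b Hfb).
Local Notation ev := (word_eval G b).

Lemma repeat_reduced x N : reduced_word (repeat x N).
Proof.
  induction N as [|N IH]. simpl; auto. simpl. split; auto.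
  destruct N; simpl; auto. unfold canc. intros [_ H]. auto.
Qed.

Lemma repeat_ok i s N : i < n -> okw n (repeat (i,s) N).
Proof. intros Hi a Ha. apply repeat_spec in Ha. subst. simpl. auto. Qed.

Lemma red_repeat i s N : i < n -> red (ev (repeat (i,s) N)) = repeat (i,s) N.
Proof.
  intro Hi. symmetry. apply red_unique. split. apply repeat_ok; auto. split. apply repeat_reduced. reflexivity.
Qed.

Lemma invw_repeat i s N : invw (repeat (i,s) N) = repeat (i, negb s) N.
Proof.
  induction N as [|N IH]. reflexivity. simpl repeat. rewrite invw_cons, IH.
  unfold inv_l. simpl. clear IH. induction N as [|N IH]; simpl; auto. rewrite IH. reflexivity.
Qed.

Lemma repeat_prefix (x : nat * bool) : forall a' s' N, a' ++ s' = repeat x N -> a' = repeat x (length a').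
Proof.
  induction a' as [|y a' IH]; intros s' N E. reflexivity.
  destruct N as [|N]; simpl in E. discriminate. injection E as <- E. simpl. f_equal. eapply IH; eauto.
Qed.

Lemma red_pow_long i s N c : i < n -> norm c < N ->
  exists t, red (ev (repeat (i,s) N) * c) = (i,s) :: t /\ N <= length t + 1 + norm c.
Proof.
  intros Hi HN.
  destruct (red_mul_decomp G n b Hfb (ev (repeat (i,s) N)) c) as (a' & s' & b' & E1 & E2 & E3).
  rewrite red_repeat in E1 by auto.
  assert (Ls : length s' <= norm c).
  { unfold B.norm. rewrite E2, length_app, invw_length. lia. }
  assert (La : length a' + length s' = N).
  { rewrite <- length_app, <- E1. apply repeat_length. }
  pose proof (repeat_prefix _ _ _ _ (eq_sym E1)) as Ha.
  destruct a' as [|y a'']. simpl in La. lia.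
  simpl in Ha. injection Ha as Hy _. subst y.
  exists (a'' ++ b'). rewrite E3. split. reflexivity. rewrite length_app. simpl in La. lia.
Qed.

Lemma red_pow_prefix i s N y l t : i < n -> red y = l :: t -> fst l <> i ->
  red (ev (repeat (i,s) N) * y) = repeat (i,s) N ++ l :: t.
Proof.
  intros Hi Ey Hl. rewrite red_concat_reduced. rewrite red_repeat, Ey; auto.
  rewrite red_repeat, Ey by auto. unfold junc. destruct N as [|N]. simpl; auto.
  rewrite <- (rev_involutive (repeat (i,s) (S N))). rewrite rev_repeat. simpl repeat. rewrite rev_involutive.
  unfold canc. simpl. intros [H _]. auto.
Qed.

Definition Kmax (X : list G) : nat := fold_right max 0 (map norm X).

Lemma norm_le_K X x : In x X -> norm x <= Kmax X.
Proof.
  unfold Kmax. induction X as [|y X IH]; simpl. tauto. intros [->|H]. lia. specialize (IH H). lia.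
Qed.

Lemma norm_gprod X : forall w, (forall x, In x w -> In x X) -> norm (gprod G w) <= length w * Kmax X.
Proof.
  induction w as [|x w IH]; intro Hw. simpl. rewrite norm_one. lia.
  simpl gprod. eapply Nat.le_trans. apply norm_mul. simpl length.
  pose proof (norm_le_K X x (Hw x (or_introl eq_refl))). assert (norm (gprod G w) <= length w * Kmax X).
  apply IH. intros; apply Hw; simpl; auto. nia.
Qed.

Lemma dist_norm X p q r : dist_le G X p q r -> norm (inv p * q) <= r * Kmax X.
Proof.
  intros [w [Hw [Hl Hp]]]. rewrite <- Hp. eapply Nat.le_trans. apply (norm_gprod X w Hw). nia.
Qed.

Lemma last_default (x : G) t d d' : last (x :: t) d = last (x :: t) d'.
Proof. revert x. induction t as [|y t IH]; intro x. reflexivity.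
  change (last (x :: y :: t) d) with (last (y :: t) d). change (last (x :: y :: t) d') with (last (y :: t) d').
  apply IH. Qed.

Lemma last_cons (h : G) t d : last (h :: t) d = last t h.
Proof. destruct t as [|x t]. reflexivity. change (last (h :: x :: t) d) with (last (x :: t) d). apply last_default. Qed.

Lemma sep_path (X : list G) (r R : nat) (P : subset_of G) (c : G)
  (HR : forall p q, dist_le G X p q r -> norm (inv p * q) <= R)
  (Hc : forall g, norm g <= R -> P (inv g * c)) :
  forall l g0, rpath G X r g0 l -> (forall x, In x (g0 :: l) -> ~ P (inv x)) ->
   R < norm (c * g0) /\ hd_error (red (c * g0)) = hd_error (red (c * last l g0)).
Proof.
  assert (Big : forall x, ~ P (inv x) -> R < norm (c * x)).
  { intros x Hx. destruct (Nat.lt_ge_cases R (norm (c * x))) as [H|H]; auto.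
    exfalso. apply Hx. specialize (Hc _ H). rewrite g_inv_mul, <- gmulA, gmulVl, gmul1r in Hc. exact Hc. }
  induction l as [|h t IH]; intros g0 Hp Hn.
  - split. apply Big, Hn; simpl; auto. reflexivity.
  - destruct Hp as [Hd Hp]. rewrite last_cons.
    destruct (IH h Hp) as [Hh Heq]. intros x Hx. apply Hn. simpl in *. tauto.
    split. apply Big, Hn; simpl; auto. rewrite <- Heq.
    assert (B0 : R < norm (c * g0)) by (apply Big, Hn; simpl; auto).
    unfold B.norm in B0, Hh.
    destruct (red (c * g0)) as [|l1 t1] eqn:E1. simpl in B0; lia.
    destruct (red (c * h)) as [|l2 t2] eqn:E2. simpl in Hh; lia.
    simpl. destruct (classic (l1 = l2)) as [->|D]. reflexivity. exfalso.
    pose proof (first_letter_diff G n b Hfb _ _ _ _ _ _ E1 E2 D) as F.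
    rewrite g_inv_mul, <- gmulA, (gmulA G (inv c) c h), gmulVl, gmul1l in F.
    specialize (HR _ _ Hd). unfold B.norm in *. rewrite E1, E2 in F. simpl in F, Hh, B0. lia.
Qed.

Lemma disconnect_lemma (X : list G) (r R : nat) (P : subset_of G) (c : G)
  (HR : forall p q, dist_le G X p q r -> norm (inv p * q) <= R)
  (Hc : forall g, norm g <= R -> P (inv g * c)) (A B : subset_of G) l1 l2 :
  l1 <> l2 -> (forall x, A x -> exists t, red (c * x) = l1 :: t) ->
  (forall x, B x -> exists t, red (c * x) = l2 :: t) ->
  r_disconnects X r (fun x => P (inv x)) A B.
Proof.
  intros D HA HB g0 l Hp Ha Hb. apply NNPP. intro Hn.
  destruct (sep_path X r R P c HR Hc l g0 Hp) as [_ Heq].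
  { intros x Hx Px. apply Hn. eauto. }
  destruct (HA _ Ha) as [t1 E1]. destruct (HB _ Hb) as [t2 E2].
  rewrite E1, E2 in Heq. simpl in Heq. injection Heq. auto.
Qed.

End Main.

End E.
Import E.

Module F.

Section Main2.
Variable G : grp.
Variable n : nat.
Variable b : nat -> G.
Hypothesis Hfb : free_basis G n b.
Local Notation "x * y" := (gmul G x y).
Local Notation inv := (ginv G).
Local Notation e := (gone G).
Local Notation red := (red G n b Hfb).
Local Notation norm := (norm G n b Hfb).
Local Notation ev := (word_eval G b).

Definition prefixes (w : list (nat * bool)) := map (fun k => firstn k w) (seq 0 (S (length w))).

Lemma in_prefixes p t : In p (prefixes (p ++ t)).
Proof.
  unfold prefixes. apply in_map_iff. exists (length p). split.
  rewrite firstn_app, Nat.sub_diag, firstn_all. simpl. apply app_nil_r.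
  apply in_seq. rewrite length_app. lia.
Qed.

Lemma stallings (H : subset_of G) : finitely_generated_subgroup H -> infinite_index H ->
  exists g0, forall h, H h -> forall t, red h <> red g0 ++ t.
Proof.
  intros [[H1 [Hmul Hinv]] [L [HL Hgen]]] Hinf.
  set (Lfull := L ++ map inv L).
  set (Qlist := e :: flat_map (fun l => map ev (prefixes (red l))) Lfull).
  assert (HLf : forall x, In x Lfull -> H x).
  { intros x Hx. apply in_app_or in Hx. destruct Hx as [Hx|Hx]. auto.
    apply in_map_iff in Hx. destruct Hx as [y [<- Hy]]. auto. }
  assert (Claim : forall w, (forall x, In x w -> In x Lfull) -> forall p t, red (gprod G w) = p ++ t ->
            exists h0 q, H h0 /\ In q Qlist /\ ev p = h0 * q).
  { induction w as [|l w IH]; intros Hw p t E.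
    - simpl in E. rewrite red_one in E. destruct p; [|discriminate].
      exists e, e. split; auto. split. simpl; auto. rewrite gmul1l. reflexivity.
    - simpl gprod in E.
      destruct (red_mul_decomp G n b Hfb l (gprod G w)) as (a' & s & b' & E1 & E2 & E3).
      rewrite E3 in E. apply app_eq_app in E. destruct E as [m [[Ea Et]|[Ep Eb]]].
      + exists e, (ev p). split; auto. split.
        * right. apply in_flat_map. exists l. split. apply Hw; simpl; auto.
          apply in_map. rewrite E1, Ea, <- app_assoc. apply in_prefixes.
        * rewrite gmul1l; reflexivity.
      + destruct (IH (fun x Hx => Hw x (or_intror Hx)) (invw s ++ m) t) as [h0 [q [Hh0 [Hq Heq]]]].
        { rewrite E2, Eb, app_assoc. reflexivity. }
        exists (l * h0), q. split. apply Hmul; auto. apply HLf, Hw; simpl; auto. split; auto.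
        rewrite ev_app, ev_invw in Heq.
        assert (Ea : ev a' = l * inv (ev s)).
        { rewrite <- (red_ev G n b Hfb l). rewrite E1, ev_app, <- gmulA, gmulVr, gmul1r. reflexivity. }
        rewrite Ep, ev_app, Ea, <- gmulA, Heq, gmulA. reflexivity. }
  apply NNPP. intro Hn.
  destruct (Hinf (map inv Qlist)) as [g Hg].
  assert (Hx : forall g0, exists h, H h /\ exists t, red h = red g0 ++ t).
  { intro g0. apply NNPP. intro Hc. apply Hn. exists g0. intros h Hh t E. apply Hc. eauto. }
  destruct (Hx (inv g)) as [h [Hh [t Et]]].
  destruct (Hgen h Hh) as [w [Hw Hwh]].
  destruct (Claim w) with (p := red (inv g)) (t := t) as [h0 [q [Hh0 [Hq Heq]]]].
  { intros x Hx'. destruct (Hw x Hx') as [Hx1|Hx1]. apply in_or_app; auto.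
    apply in_or_app; right. rewrite <- (g_inv_inv G x). apply in_map; auto. }
  { rewrite Hwh. exact Et. }
  rewrite red_ev in Heq.
  apply (Hg (inv q)). apply in_map; auto.
  rewrite g_inv_inv.
  assert (Eg : g = inv q * inv h0).
  { rewrite <- g_inv_mul, <- Heq, g_inv_inv. reflexivity. }
  rewrite Eg, g_V_mul. apply Hinv; auto.
Qed.

Definition letters := flat_map (fun i => [(i,true);(i,false)]) (seq 0 n).
Fixpoint words (k : nat) : list (list (nat * bool)) :=
  match k with 0 => [[]] | S k => flat_map (fun l => map (cons l) (words k)) letters end.

Lemma in_letters a : fst a < n -> In a letters.
Proof.
  destruct a as [i s]; simpl; intro Hi. unfold letters. apply in_flat_map. exists i. split.
  apply in_seq; lia. destruct s; simpl; auto.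
Qed.

Lemma in_words : forall w, okw n w -> In w (words (length w)).
Proof.
  induction w as [|a w IH]; intro Hw. simpl; auto.
  simpl. apply in_flat_map. exists a. split. apply in_letters, Hw; simpl; auto.
  apply in_map. apply IH. intros x Hx; apply Hw; simpl; auto.
Qed.

Definition Ball (R : nat) := flat_map (fun k => map ev (words k)) (seq 0 (S R)).

Lemma in_ball R g : norm g <= R -> In g (Ball R).
Proof.
  intro Hg. unfold Ball. apply in_flat_map. exists (norm g). split. apply in_seq. lia.
  rewrite <- (red_ev G n b Hfb g) at 1. apply in_map. apply in_words. apply red_ok.
Qed.

Lemma upper (P : subset_of G) : positive_cone P -> forall p0, P p0 -> forall L : list G,
  exists c, forall x, In x L -> P (inv x * c).
Proof.
  intros [Hcl [Htri _]] p0 Hp0. induction L as [|x L [c Hc]].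
  - exists e. intros x [].
  - destruct (classic (P (inv x * c))) as [Hx|Hx].
    + exists c. intros y [<-|Hy]; auto.
    + exists (x * p0). intros y [<-|Hy]. rewrite g_Vl_mul; auto.
      destruct (Htri (inv x * c)) as [H|[H|H]]. tauto.
      * rewrite g_inv_mul, g_inv_inv in H.
        replace (inv y * (x * p0)) with ((inv y * c) * ((inv c * x) * p0)). auto.
        rewrite <- !gmulA. f_equal. apply g_V_mul.
      * assert (x = c). { rewrite <- (g_V_mul G x c), H, gmul1r. reflexivity. }
        subst x. rewrite gmulA. auto.
Qed.

Lemma ev_repeat_ne i s N : i < n -> 0 < N -> ev (repeat (i,s) N) <> e.
Proof.
  intros Hi HN E. pose proof (red_repeat G n b Hfb i s N Hi) as R. rewrite E, red_one in R.
  destruct N; [lia|discriminate].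
Qed.

Lemma ev_repeat_inv i s N : ev (repeat (i, negb s) N) = inv (ev (repeat (i,s) N)).
Proof. rewrite <- invw_repeat, ev_invw. reflexivity. Qed.

Lemma cone_elem (P : subset_of G) (HP : positive_cone P) i N c : i < n -> 0 < N ->
  exists s, P (inv c * (ev (repeat (i,s) N) * c)).
Proof.
  intros Hi HN. destruct HP as [_ [Htri _]].
  destruct (Htri (inv c * (ev (repeat (i,true) N) * c))) as [H|[H|H]].
  - eauto.
  - exists false. pose proof (ev_repeat_inv i true N) as Ei. simpl negb in Ei. rewrite Ei.
    rewrite !g_inv_mul, g_inv_inv in H. rewrite gmulA. exact H.
  - exfalso. apply (ev_repeat_ne i true N Hi HN).
    assert (E1 : ev (repeat (i,true) N) * c = c).
    { rewrite <- (g_V_mul G c (ev (repeat (i, true) N) * c)), H, gmul1r. reflexivity. }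
    rewrite <- (gmul1r G (ev (repeat (i,true) N))), <- (gmulVr G c), gmulA, E1, gmulVr. reflexivity.
Qed.

End Main2.

End F.
Import F.


Theorem proposition5p4 (G : grp) (n : nat) (b : nat -> G) :
  2 <= n -> free_basis G n b ->
  @Hucha G (fun H => finitely_generated_subgroup H /\ infinite_index H).
Proof.
  intros Hn Hfb.
  split.
  { exists (map (letter_val G b) (letters n)). intro g.
    exists (map (letter_val G b) (red G n b Hfb g)). split.
    - intros x Hx. apply in_map_iff in Hx. destruct Hx as [a [<- Ha]]. apply in_map.
      apply in_letters. apply (red_ok G n b Hfb g); auto.
    - apply (red_ev G n b Hfb g). }
  split. { apply (free_left_orderable G n b Hfb). }
  intros X HX Hsym P HP H [Hfg Hinf] r Hr.
  set (R := r * Kmax G n b Hfb X).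
  assert (HR : forall p q, dist_le G X p q r -> norm G n b Hfb (gmul G (ginv G p) q) <= R).
  { intros p q Hd. apply dist_norm; auto. }
  assert (Hp0 : exists p0, P p0).
  { destruct HP as [_ [Htri _]]. destruct (Htri (b 0)) as [H0|[H0|H0]]; eauto.
    exfalso. apply (ev_repeat_ne G n b Hfb 0 true 1). lia. lia.
    change (gmul G (b 0) (gone G) = gone G). rewrite gmul1r. exact H0. }
  destruct Hp0 as [p0 Hp0].
  destruct (upper G P HP p0 Hp0 (Ball G n b R)) as [c Hc0].
  assert (Hc : forall g, norm G n b Hfb g <= R -> P (gmul G (ginv G g) c)).
  { intros g Hg. apply Hc0. apply (in_ball G n b Hfb); auto. }
  exists (fun x => P (ginv G x)).
  split. { intros g Hg; exact Hg. }
  split.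
  - set (N := S (norm G n b Hfb c)).
    destruct (cone_elem G n b Hfb P HP 0 N c) as [s0 Hs0]; [lia|lia|].
    destruct (cone_elem G n b Hfb P HP 1 N c) as [s1 Hs1]; [lia|lia|].
    eexists; eexists. split. exact Hs0. split. exact Hs1.
    apply (disconnect_lemma G n b Hfb X r R P c HR Hc _ _ (0,s0) (1,s1)).
    + intro E. injection E. lia.
    + intros x ->. rewrite g_V_mul.
      destruct (red_pow_long G n b Hfb 0 s0 N c) as [t [Et _]]; [lia|unfold N; lia|]. eauto.
    + intros x ->. rewrite g_V_mul.
      destruct (red_pow_long G n b Hfb 1 s1 N c) as [t [Et _]]; [lia|unfold N; lia|]. eauto.
  - destruct (stallings G n b Hfb H Hfg Hinf) as [g0 Hg0].
    destruct Hfg as [[H1 [Hmul Hinv]] _].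
    assert (Hz : red G n b Hfb g0 <> []).
    { intro E. apply (Hg0 (gone G) H1 []). rewrite red_one, E. reflexivity. }
    destruct (invw (red G n b Hfb g0)) as [|lam rest] eqn:Ez.
    { exfalso. apply Hz. rewrite <- (invw_inv (red G n b Hfb g0)), Ez. reflexivity. }
    assert (Hlam : forall h, H h -> exists t', red G n b Hfb (gmul G (ginv G g0) h) = lam :: t').
    { intros h Hh.
      destruct (red_mul_decomp G n b Hfb (ginv G g0) h) as (a' & s & b' & E1 & E2 & E3).
      rewrite red_inv, Ez in E1.
      destruct a' as [|y a''].
      - exfalso. simpl in E1. apply (Hg0 h Hh b'). rewrite E2, <- E1.
        rewrite <- (invw_inv (red G n b Hfb g0)), Ez. reflexivity.
      - injection E1 as <- _. exists (a'' ++ b'). rewrite E3. reflexivity. }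
    set (j := if Nat.eqb (fst lam) 0 then 1 else 0).
    assert (Hj : j < n /\ fst lam <> j).
    { unfold j. destruct (Nat.eqb_spec (fst lam) 0); split; lia. }
    destruct Hj as [Hjn Hjl].
    exists (gmul G (ginv G c) (gmul G (word_eval G b (repeat (j,true) 1)) (ginv G g0))).
    exists (gmul G (ginv G c) (gmul G (word_eval G b (repeat (j,false) 1)) (ginv G g0))).
    assert (Hco : forall s x, lcoset (gmul G (ginv G c) (gmul G (word_eval G b (repeat (j,s) 1)) (ginv G g0))) H x ->
               exists t, red G n b Hfb (gmul G c x) = (j,s) :: t).
    { intros s x [h [Hh ->]]. rewrite <- gmulA, g_V_mul, <- gmulA.
      destruct (Hlam h Hh) as [t' Et'].
      rewrite (red_pow_prefix G n b Hfb j s 1 _ lam t' Hjn Et'); auto.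
      eexists. reflexivity. }
    apply (disconnect_lemma G n b Hfb X r R P c HR Hc _ _ (j,true) (j,false)).
    + intro E; discriminate.
    + apply Hco.
    + apply Hco.
Qed.
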